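(* Let $G$ be a group and let $S=\bigoplus_{g\in G}S_g$ be virtually epsilon-strongly $G$-graded where, for each $g\in G$, $M_g$ is a set of pairwise orthogonal, commuting idempotents such that $E_g=\bigvee M_g$ is a set of local units for $S_gS_{g^{-1}}$. Then for every $g\in G$ and $s\in S_g$ there exist $m_1,\dots,m_i\in M_g$ and $m_1',\dots,m_j'\in M_{g^{-1}}$ such that $(m_1\vee\cdots\vee m_i)s=s$ and $s(m_1'\vee\cdots\vee m_j')=s$.
   Context: Rings are associative, not necessarily unital; $AB$ denotes finite sums of products. A $G$-grading: $S=\bigoplus_gS_g$, $S_gS_h\subseteq S_{gh}$. Idempotents are ordered by $a\le b$ iff $a=ab=ba$; $\vee$ is the least upper bound; $\bigvee M$ is the set of finite joins of elements of $M$. A set of local units for a ring $R$ is a $\vee$-closed set of pairwise commuting idempotents of $R$ such that every $r\in R$ has some $f$ in it with $fr=rf=r$. The grading is virtually epsilon-strong if $S_gS_{g^{-1}}S_g=S_g$ for all $g$ and each $S_gS_{g^{-1}}$ has enough idempotents (a set of pairwise orthogonal commuting idempotents whose $\vee$-closure is a set of local units). *)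

(* Defs.v *)
From mathcomp Require Import all_boot all_order all_algebra.
From Stdlib Require List.
Set Implicit Arguments. Unset Strict Implicit. Unset Printing Implicit Defensive.
Import GRing.Theory.
Local Open Scope ring_scope.

Record is_group (G : Type) (gmul : G -> G -> G) (gone : G) (ginv : G -> G) :
  Prop := IsGroup {
  gmulA : forall x y z, gmul x (gmul y z) = gmul (gmul x y) z;
  gmul1 : forall x, gmul gone x = x /\ gmul x gone = x;
  gmulV : forall x, gmul (ginv x) x = gone /\ gmul x (ginv x) = gone
}.

Record is_rng (V : zmodType) (mul : V -> V -> V) : Prop := IsRng {
  mulA : forall x y z, mul x (mul y z) = mul (mul x y) z;
  mulDl : forall x y z, mul (x + y) z = mul x z + mul y z;
  mulDr : forall x y z, mul x (y + z) = mul x y + mul x z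
}.

Section Defs.
Variables (V : zmodType) (mul : V -> V -> V).

Definition is_addsubgroup (A : V -> Prop) : Prop :=
  A 0 /\ (forall x y, A x -> A y -> A (x - y)).

Definition prodset (A B : V -> Prop) : V -> Prop :=
  fun x => exists l : seq (V * V)%type,
    (forall p, List.In p l -> A p.1 /\ B p.2) /\
    x = \sum_(p <- l) mul p.1 p.2.

Definition prodset3 (A B C : V -> Prop) : V -> Prop :=
  prodset (prodset A B) C.

Definition set_eq (A B : V -> Prop) : Prop := forall x, A x <-> B x.

Definition idempotent (e : V) : Prop := mul e e = e.

Definition idem_le (a b : V) : Prop := a = mul a b /\ a = mul b a.

Definition is_lub (R : V -> Prop) (l : seq V) (z : V) : Prop :=
  R z /\ idempotent z /\
  (forall x, List.In x l -> idem_le x z) /\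
  (forall u, R u -> idempotent u -> (forall x, List.In x l -> idem_le x u) ->
     idem_le z u).

Definition joins (R M : V -> Prop) : V -> Prop :=
  fun z => exists l : seq V, (forall x, List.In x l -> M x) /\ is_lub R l z.

Definition local_units (R E : V -> Prop) : Prop :=
  (forall e, E e -> R e /\ idempotent e) /\
  (forall e f, E e -> E f -> mul e f = mul f e) /\
  (forall e f, E e -> E f -> exists z, is_lub R [:: e; f] z /\ E z) /\
  (forall r, R r -> exists f, E f /\ mul f r = r /\ mul r f = r).

Definition orth_idems (R M : V -> Prop) : Prop :=
  (forall e, M e -> R e /\ idempotent e) /\
  (forall e f, M e -> M f -> mul e f = mul f e) /\
  (forall e f, M e -> M f -> e <> f -> mul e f = 0).

Definition enough_idempotents (R : V -> Prop) : Prop :=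
  exists M : V -> Prop, orth_idems R M /\ local_units R (joins R M).

Variables (G : Type) (gmul : G -> G -> G) (ginv : G -> G).

Definition is_grading (S : G -> V -> Prop) : Prop :=
  (forall g, is_addsubgroup (S g)) /\
  (forall g h x y, S g x -> S h y -> S (gmul g h) (mul x y)) /\
  (forall s : V, exists l : seq (G * V)%type,
      List.NoDup (map fst l) /\ (forall p, List.In p l -> S p.1 p.2) /\
      s = \sum_(p <- l) p.2) /\
  (forall l : seq (G * V)%type,
      List.NoDup (map fst l) -> (forall p, List.In p l -> S p.1 p.2) ->
      \sum_(p <- l) p.2 = 0 -> forall p, List.In p l -> p.2 = 0).

Definition virtually_epsilon_strong (S : G -> V -> Prop) : Prop :=
  is_grading S /\
  (forall g, set_eq (prodset3 (S g) (S (ginv g)) (S g)) (S g)) /\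
  (forall g, enough_idempotents (prodset (S g) (S (ginv g)))).

End Defs.

(* Main.v *)
Require Import Defs.
From mathcomp Require Import all_boot all_order all_algebra.
From Stdlib Require List.
Local Open Scope ring_scope.
Import GRing.Theory.

Section Aux.
Set Implicit Arguments.
Variables (V : zmodType) (mul : V -> V -> V).
Hypothesis HR : is_rng mul.

Lemma mul0r' x : mul 0 x = 0.
Proof.
have h := Defs.mulDl HR 0 0 x. rewrite addr0 in h.
by apply: (addrI (mul 0 x)); rewrite addr0 -h.
Qed.
Lemma mulr0' x : mul x 0 = 0.
Proof.
have h := Defs.mulDr HR x 0 0. rewrite addr0 in h.
by apply: (addrI (mul x 0)); rewrite addr0 -h.
Qed.

Lemma mul_sumr (T : Type) (l : seq T) F x :
  mul x (\sum_(p <- l) F p) = \sum_(p <- l) mul x (F p).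
Proof.
elim: l => [|a l IH]; first by rewrite !big_nil mulr0'.
by rewrite !big_cons (Defs.mulDr HR) IH.
Qed.
Lemma mul_suml (T : Type) (l : seq T) F x :
  mul (\sum_(p <- l) F p) x = \sum_(p <- l) mul (F p) x.
Proof.
elim: l => [|a l IH]; first by rewrite !big_nil mul0r'.
by rewrite !big_cons (Defs.mulDl HR) IH.
Qed.

Variables (R E : V -> Prop).
Hypothesis HE : local_units mul R E.
Hypothesis R0 : R 0.

Definition QL x := exists f, E f /\ mul f x = x.
Definition QR x := exists f, E f /\ mul x f = x.

Lemma QL0 : QL 0.
Proof. case: HE => _ [_ [_ H]]; case: (H 0 R0) => f [Ef [h _]]; by exists f. Qed.
Lemma QR0 : QR 0.
Proof. case: HE => _ [_ [_ H]]; case: (H 0 R0) => f [Ef [_ h]]; by exists f. Qed.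
Lemma QLR x : R x -> QL x.
Proof. case: HE => _ [_ [_ H]] Rx; case: (H x Rx) => f [Ef [h _]]; by exists f. Qed.
Lemma QRR x : R x -> QR x.
Proof. case: HE => _ [_ [_ H]] Rx; case: (H x Rx) => f [Ef [_ h]]; by exists f. Qed.

Lemma QLD x y : QL x -> QL y -> QL (x + y).
Proof.
case=> e [Ee hx] [f [Ef hy]].
case: HE => _ [_ [H _]]; case: (H e f Ee Ef) => z [[_ [_ [hle _]]] Ez].
exists z; split => //.
have [he1 he2] := hle e (or_introl erefl).
have [hf1 hf2] := hle f (or_intror (or_introl erefl)).
by rewrite (Defs.mulDr HR) -{1}hx -{1}hy !(Defs.mulA HR) -he2 -hf2 hx hy.
Qed.
Lemma QRD x y : QR x -> QR y -> QR (x + y).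
Proof.
case=> e [Ee hx] [f [Ef hy]].
case: HE => _ [_ [H _]]; case: (H e f Ee Ef) => z [[_ [_ [hle _]]] Ez].
exists z; split => //.
have [he1 he2] := hle e (or_introl erefl).
have [hf1 hf2] := hle f (or_intror (or_introl erefl)).
by rewrite (Defs.mulDl HR) -{1}hx -{1}hy -!(Defs.mulA HR) -he1 -hf1 hx hy.
Qed.
Lemma QLm x c : QL x -> QL (mul x c).
Proof. case=> f [Ef h]; exists f; split => //; by rewrite (Defs.mulA HR) h. Qed.
Lemma QRm x c : QR x -> QR (mul c x).
Proof. case=> f [Ef h]; exists f; split => //; by rewrite -(Defs.mulA HR) h. Qed.

Lemma QLsum (T : Type) (l : seq T) F :
  (forall p, List.In p l -> QL (F p)) -> QL (\sum_(p <- l) F p).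
Proof.
elim: l => [|a l IH] H; first by rewrite big_nil; exact: QL0.
rewrite big_cons; apply: QLD; first by apply: H; left.
by apply: IH => p hp; apply: H; right.
Qed.
Lemma QRsum (T : Type) (l : seq T) F :
  (forall p, List.In p l -> QR (F p)) -> QR (\sum_(p <- l) F p).
Proof.
elim: l => [|a l IH] H; first by rewrite big_nil; exact: QR0.
rewrite big_cons; apply: QRD; first by apply: H; left.
by apply: IH => p hp; apply: H; right.
Qed.
End Aux.

Lemma prodset0 (V : zmodType) (mul : V -> V -> V) A B : prodset mul A B 0.
Proof. by exists [::]; split => //; rewrite big_nil. Qed.

Theorem lemma5p12 (G : Type) (gmul : G -> G -> G) (gone : G) (ginv : G -> G)
  (V : zmodType) (mul : V -> V -> V) (S : G -> V -> Prop)
  (M : G -> V -> Prop) :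
  is_group gmul gone ginv ->
  is_rng mul ->
  virtually_epsilon_strong mul gmul ginv S ->
  (forall g, orth_idems mul (prodset mul (S g) (S (ginv g))) (M g)) ->
  (forall g, local_units mul (prodset mul (S g) (S (ginv g)))
                (joins mul (prodset mul (S g) (S (ginv g))) (M g))) ->
  forall g s, S g s ->
    (exists (l : seq V) (z : V),
       (forall m, List.In m l -> M g m) /\
       is_lub mul (prodset mul (S g) (S (ginv g))) l z /\ mul z s = s) /\
    (exists (l' : seq V) (z' : V),
       (forall m, List.In m l' -> M (ginv g) m) /\
       is_lub mul (prodset mul (S (ginv g)) (S (ginv (ginv g)))) l' z' /\
       mul s z' = s).
Proof.
move=> HG HR [[_ [Hmul _]] [H3 _]] _ HLU g s Ss.
have gii : ginv (ginv g) = g.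
  have [a1 _] := gmulV HG (ginv g). have [b2 _] := gmulV HG g.
  have [c1 c2] := gmul1 HG (ginv (ginv g)). have [d1 _] := gmul1 HG g.
  by rewrite -[LHS]c2 -b2 (gmulA HG) a1 d1.
have [l [Hl ->]] := proj2 (H3 g s) Ss; split.
- have : @QL V mul (joins mul (prodset mul (S g) (S (ginv g))) (M g))
             (\sum_(p <- l) mul p.1 p.2).
    apply: (QLsum HR (HLU g) (prodset0 _ _ _ _)) => p hp; apply: (QLm HR).
    apply: (QLR (HLU g)). by case: (Hl p hp).
  case=> f [[l0 [Hl0 Hlub]] h]; by exists l0, f.
- have : @QR V mul (joins mul (prodset mul (S (ginv g)) (S (ginv (ginv g)))) (M (ginv g)))
             (\sum_(p <- l) mul p.1 p.2).
    apply: (QRsum HR (HLU (ginv g)) (prodset0 _ _ _ _)) => p hp.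
    case: (Hl p hp) => [[lp [Hlp ->]] Sp2].
    rewrite (mul_suml HR); apply: (QRsum HR (HLU (ginv g)) (prodset0 _ _ _ _)) => q hq.
    rewrite -(Defs.mulA HR); apply: (QRm HR).
    apply: (QRR (HLU (ginv g))).
    exists [:: (q.2, p.2)]; split; last by rewrite big_cons big_nil addr0.
    move=> r [<-|[]] /=; rewrite gii; split => //; by case: (Hlp q hq).
  case=> f [[l0 [Hl0 Hlub]] h]; by exists l0, f.
Qed.
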